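(* Let $A$ be a unique factorization domain and $R$ a subring of $A$ such that the group of units of $R$ equals that of $A$ and $R_0\cap A=R$, where $R_0$ is the field of fractions of $R$ inside that of $A$. The following are equivalent: (i) $\operatorname{Sqf}R\subset\operatorname{Sqf}A$; (ii) for every $x\in A$ and $y\in\operatorname{Sqf}A$, if $x^2y\in R\setminus\{0\}$, then $x,y\in R$ (i.e. $R$ is square-factorially closed in $A$).
   Context: For a commutative ring $R$, $\operatorname{Sqf}R$ is the set of square-free elements of $R$, where $a\in R$ is square-free if it cannot be written as $a=b^2c$ with $b,c\in R$ and $b$ not a unit of $R$. *)

(* Defs.v *)
From HB Require Import structures.
From mathcomp Require Import all_boot all_order all_algebra.
Set Implicit Arguments. Unset Strict Implicit. Unset Printing Implicit Defensive.
Import Order.TTheory GRing.Theory Num.Theory.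
Local Open Scope ring_scope.

Section Defs.
Variable A : idomainType.

Definition unit_in (S : {pred A}) (b : A) : Prop :=
  b \in S /\ exists b', b' \in S /\ b * b' = 1.

Definition sqfree_in (S : {pred A}) (a : A) : Prop :=
  a \in S /\ ~ (exists b c, [/\ b \in S, c \in S, a = b ^+ 2 * c & ~ unit_in S b]).

Definition sqfree (a : A) : Prop := sqfree_in predT a.

Definition irreducible_elt (a : A) : Prop :=
  a != 0 /\ a \isn't a GRing.unit /\
  forall b c, a = b * c -> b \is a GRing.unit \/ c \is a GRing.unit.

Definition associated (a b : A) : Prop :=
  exists2 u, u \is a GRing.unit & a = u * b.

Definition is_UFD : Prop :=
  forall a : A, a != 0 -> a \isn't a GRing.unit ->
    (exists s : seq A, (forall x, x \in s -> irreducible_elt x) /\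
                        a = \prod_(x <- s) x) /\
    (forall s t : seq A,
        (forall x, x \in s -> irreducible_elt x) ->
        (forall x, x \in t -> irreducible_elt x) ->
        a = \prod_(x <- s) x -> a = \prod_(x <- t) x ->
        exists t', [/\ perm_eq t t', size s = size t' &
                   forall i, (i < size s)%N -> associated (nth 0 s i) (nth 0 t' i)]).

Definition is_subring (R : {pred A}) : Prop :=
  [/\ 1 \in R, forall x y, x \in R -> y \in R -> x - y \in R
    & forall x y, x \in R -> y \in R -> x * y \in R].

Definition same_units (R : {pred A}) : Prop :=
  forall u : A, u \is a GRing.unit <-> unit_in R u.

(* R_0 \cap A = R, where R_0 = { r / s | r, s \in R, s <> 0 } inside Frac(A):
   an element a of A lies in R_0 iff a * s = r for some r, s \in R, s <> 0. *)
Definition frac_closed (R : {pred A}) : Prop :=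
  forall a : A, (exists r s, [/\ r \in R, s \in R, s != 0 & a * s = r]) -> a \in R.

Definition sqf_closed (R : {pred A}) : Prop :=
  forall x y : A, sqfree y -> x ^+ 2 * y \in R -> x ^+ 2 * y != 0 ->
    x \in R /\ y \in R.

End Defs.

(* Main.v *)
Require Import Defs.
From HB Require Import structures.
From mathcomp Require Import all_boot all_order all_algebra zify ring.
From Stdlib Require Import Classical.
Import GRing.Theory.
Set Implicit Arguments.
Local Open Scope ring_scope.

Definition fl (A : idomainType) (a : A) (n : nat) :=
  a \is a GRing.unit \/ exists s : seq A,
    [/\ forall x, x \in s -> irreducible_elt x, a = \prod_(x <- s) x & (size s <= n)%N].

Arguments fl {A}.

Lemma nonunit_size (A : idomainType) (a : A) (s : seq A) :
  a \isn't a GRing.unit -> a = \prod_(x <- s) x -> (0 < size s)%N.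
Proof. move=> aU; case: s => //; rewrite big_nil => a1; by rewrite a1 unitr1 in aU. Qed.

Lemma fl_ex (A : idomainType) (hU : is_UFD A) (a : A) : a != 0 -> exists n, fl a n.
Proof.
move=> a0; case: (boolP (a \is a GRing.unit)) => aU; first by exists 0%N; left.
have [s [si aE]] := (hU a a0 aU).1.
by exists (size s); right; exists s.
Qed.

Lemma dec (A : idomainType) (hU : is_UFD A) (a b c : A) n :
  a != 0 -> a = b * c -> b \isn't a GRing.unit -> fl a n -> (0 < n)%N /\ fl c n.-1.
Proof.
move=> a0 abc bU [aU|[s [si aE sn]]].
  by rewrite abc unitrM in aU; case/andP: aU => bu _; rewrite bu in bU.
have b0 : b != 0 by apply: contraNneq a0 => b0; rewrite abc b0 mul0r.
have c0 : c != 0 by apply: contraNneq a0 => c0; rewrite abc c0 mulr0.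
have aU : a \isn't a GRing.unit by rewrite abc unitrM negb_and bU.
have s0 := nonunit_size aU aE.
have [tb [tbi btb]] := (hU b b0 bU).1.
have tb0 := nonunit_size bU btb.
case: (boolP (c \is a GRing.unit)) => cU.
  split; last by left.
  by apply: leq_trans sn.
have [tc [tci ctc]] := (hU c c0 cU).1.
have [_ uq] := hU a a0 aU.
have hi : forall x, x \in tb ++ tc -> irreducible_elt x.
  by move=> x; rewrite mem_cat => /orP[]; [apply tbi| apply tci].
have aE2 : a = \prod_(x <- tb ++ tc) x by rewrite big_cat /= -btb -ctc.
have [t' [pt ss _]] := uq s (tb ++ tc) si hi aE aE2.
rewrite -(perm_size pt) size_cat in ss.
split; first lia.
right; exists tc; split => //. move: sn tb0; rewrite ss; case: n => [|n] /=; lia.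
Qed.

Definition dv (A : idomainType) (p e : A) := exists d, e = p * d.
Arguments dv {A}.

Lemma dv_mem (A : idomainType) (q : A) (s : seq A) : q \in s -> dv q (\prod_(x <- s) x).
Proof. by move=> qs; exists (\prod_(x <- rem q s) x); rewrite (big_rem q). Qed.

Lemma irr_mulu (A : idomainType) (p u : A) :
  irreducible_elt p -> u \is a GRing.unit -> irreducible_elt (p * u).
Proof.
move=> [p0 [pU pirr]] uU; split; first by rewrite mulf_neq0 //; apply: contraTneq uU => ->; rewrite unitr0.
split; first by rewrite unitrM negb_and pU.
move=> b c e.
have : p = b * (c * u^-1) by rewrite mulrA -e mulrK.
move=> /pirr [] ; first by left.
by rewrite unitrM => /andP [cU _]; right.
Qed.

Lemma prime_irr (A : idomainType) (hU : is_UFD A) (p b c : A) :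
  irreducible_elt p -> dv p (b * c) -> dv p b \/ dv p c.
Proof.
move=> pI [d bcE]; have [p0 [pU pirr]] := pI.
have [->|b0] := eqVneq b 0; first by left; exists 0; rewrite mulr0.
have [->|c0] := eqVneq c 0; first by right; exists 0; rewrite mulr0.
case: (boolP (b \is a GRing.unit)) => bU.
  by right; exists (b^-1 * d); rewrite mulrCA -bcE mulKr.
case: (boolP (c \is a GRing.unit)) => cU.
  by left; exists (c^-1 * d); rewrite mulrCA -bcE [b * c]mulrC mulKr.
have bc0 : b * c != 0 by rewrite mulf_neq0.
have bcU : b * c \isn't a GRing.unit by rewrite unitrM negb_and bU.
have d0 : d != 0 by apply: contraNneq bc0 => d0; rewrite bcE d0 mulr0.
have [t [w [ti tE wU t0]]] : exists t w, [/\ forall x, x \in t -> irreducible_elt x,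
    p * d = \prod_(x <- t) x, w \is a GRing.unit & nth 0 t 0 = w * p].
  case: (boolP (d \is a GRing.unit)) => dU.
    exists [:: p * d], d; split => //.
    - by move=> x; rewrite inE => /eqP ->; apply: irr_mulu.
    - by rewrite big_seq1.
    - by rewrite mulrC.
  have [td [tdi dE]] := (hU d d0 dU).1.
  exists (p :: td), 1; split => //.
  - by move=> x; rewrite inE => /orP [/eqP ->|]; [|apply: tdi].
  - by rewrite big_cons -dE.
  - by rewrite unitr1.
  - by rewrite mul1r.
have [tb [tbi btb]] := (hU b b0 bU).1.
have [tc [tci ctc]] := (hU c c0 cU).1.
have hi : forall x, x \in tb ++ tc -> irreducible_elt x.
  by move=> x; rewrite mem_cat => /orP[]; [apply tbi| apply tci].
have E1 : b * c = \prod_(x <- t) x by rewrite bcE.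
have E2 : b * c = \prod_(x <- tb ++ tc) x by rewrite big_cat /= -btb -ctc.
have [_ uq] := hU (b * c) bc0 bcU.
have [t' [pt ss ass]] := uq t (tb ++ tc) ti hi E1 E2.
have tpos : (0 < size t)%N.
  apply: (nonunit_size (a := p * d)) => //; rewrite -bcE //.
have [v vU tv] := ass 0%N tpos.
have qin : nth 0 t' 0 \in tb ++ tc by rewrite (perm_mem pt) mem_nth // -ss.
have pE : p = w^-1 * v * nth 0 t' 0 by rewrite -mulrA -tv t0 mulKr.
move: qin; rewrite mem_cat => /orP [] /dv_mem [e eE].
  left; exists (v^-1 * w * e); rewrite btb eE pE.
  have -> : w^-1 * v * t'`_0 * (v^-1 * w * e) = t'`_0 * e * ((w^-1 * w) * (v * v^-1)) by ring.
  by rewrite mulVr // mulrV // !mulr1.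
right; exists (v^-1 * w * e); rewrite ctc eE pE.
have -> : w^-1 * v * t'`_0 * (v^-1 * w * e) = t'`_0 * e * ((w^-1 * w) * (v * v^-1)) by ring.
by rewrite mulVr // mulrV // !mulr1.
Qed.

Lemma unit_inT (A : idomainType) (b : A) : unit_in predT b <-> b \is a GRing.unit.
Proof.
split; first by move=> [_ [b' [_ e]]]; apply/unitrPr; exists b'.
by move=> /unitrPr [b' e]; split => //; exists b'.
Qed.

Lemma sqfree_nsq (A : idomainType) (y b c : A) : sqfree y -> y = b ^+ 2 * c -> b \is a GRing.unit.
Proof.
move=> [_ H] E; apply: NNPP => bU; apply: H; exists b, c; split => //.
by move/unit_inT.
Qed.

Lemma sqfree_neq0 (A : idomainType) (y : A) : sqfree y -> y != 0.
Proof.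
move=> sy; apply/negP => /eqP y0.
have := @sqfree_nsq _ y 0 0 sy; rewrite y0 mulr0 unitr0 => H.
by have := H erefl.
Qed.

Lemma uniq_dec (A : idomainType) (hU : is_UFD A) n : forall x x' y y' : A,
  x != 0 -> fl x n -> x ^+ 2 * y = x' ^+ 2 * y' -> sqfree y -> sqfree y' ->
  exists2 u, u \is a GRing.unit & x = u * x'.
Proof.
elim/ltn_ind: n => n IH x x' y y' x0 fx E sy sy'.
case: (boolP (x \is a GRing.unit)) => xU.
  have x'U : x' \is a GRing.unit.
    apply: (@sqfree_nsq _ y x' (x^-1 ^+ 2 * y') sy).
    by rewrite mulrCA -E mulrA -exprMn mulVr // expr1n mul1r.
  exists (x / x'); first by rewrite unitrM unitrV xU x'U.
  by rewrite divrK.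
have fx' := fx; case: fx' => [xU'|[s [si xE sn]]]; first by rewrite xU' in xU.
case: s si xE sn => [|p s1] si xE sn.
  by rewrite xE big_nil unitr1 in xU.
rewrite big_cons in xE.
have pI : irreducible_elt p by apply: si; rewrite inE eqxx.
have [p0 [pU _]] := pI.
set x1 := \prod_(j <- s1) j in xE.
have [npos fx1] := @dec _ hU x p x1 n x0 xE pU fx.
have hpx' : dv p x'.
  apply: NNPP => Hn.
  have H1 : dv p (x' * (x' * y')).
    by exists (p * x1 ^+ 2 * y); rewrite mulrA -expr2 -E xE; ring.
  case: (prime_irr hU _ _ pI H1) => // /(prime_irr hU _ _ pI) [] // [z zE].
  have H2 : p * x1 ^+ 2 * y = x' ^+ 2 * z.
    apply: (mulfI p0); rewrite [RHS]mulrCA -zE -E xE; ring.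
  have H3 : dv p (x' * (x' * z)) by exists (x1 ^+ 2 * y); rewrite mulrA -expr2 -H2 mulrA.
  case: (prime_irr hU _ _ pI H3) => // /(prime_irr hU _ _ pI) [] // [w wE].
  have := @sqfree_nsq _ y' p w sy'; rewrite zE wE mulrA -expr2 => H.
  by rewrite (H erefl) in pU.
case: hpx' => x1' x'E.
have x10 : x1 != 0 by apply: contraNneq x0 => x10; rewrite xE x10 mulr0.
have E' : x1 ^+ 2 * y = x1' ^+ 2 * y'.
  apply: (mulfI (expf_neq0 2 p0)).
  by move: E; rewrite xE x'E !exprMn !mulrA.
have nlt : (n.-1 < n)%N by case: n npos {IH fx fx1 sn}.
have [u uU x1E] := IH n.-1 nlt x1 x1' y y' x10 fx1 E' sy sy'.
by exists u => //; rewrite xE x'E x1E mulrCA.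
Qed.

Lemma sqf_ex (A : idomainType) (hU : is_UFD A) (S : {pred A})
  (hm : forall x y, x \in S -> y \in S -> x * y \in S) (h1 : 1 \in S)
  (hS : forall b, ~ unit_in S b -> b \isn't a GRing.unit) n :
  forall a, a != 0 -> fl a n -> a \in S ->
  exists x y, [/\ x \in S, y \in S, a = x ^+ 2 * y & sqfree_in S y].
Proof.
elim/ltn_ind: n => n IH a a0 fa aS.
case: (classic (sqfree_in S a)) => Hs.
  by exists 1, a; split => //; rewrite expr1n mul1r.
have [b [c [bS cS E bU]]] : exists b c, [/\ b \in S, c \in S, a = b ^+ 2 * c & ~ unit_in S b].
  by apply: NNPP => H; apply: Hs; split.
have bU' := hS b bU.
have E1 : a = b * (b * c) by rewrite E expr2 mulrA.
have bc0 : b * c != 0 by apply: contraNneq a0 => e; rewrite E1 e mulr0.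
have c0 : c != 0 by apply: contraNneq a0 => e; rewrite E e mulr0.
have [n1 fbc] := @dec _ hU a b (b * c) n a0 E1 bU' fa.
have [n2 fc] := @dec _ hU (b * c) b c n.-1 bc0 erefl bU' fbc.
have nlt : (n.-1.-1 < n)%N by move: n1 n2; case: n {IH fa fbc fc} => // [[|m]].
have [x [y [xS yS cE sy]]] := IH _ nlt c c0 fc cS.
exists (b * x), y; split => //; first by apply: hm.
by rewrite E cE exprMn mulrA.
Qed.

Theorem theorem3p4 (A : idomainType) (R : {pred A}) :
  is_UFD A -> is_subring R -> same_units R -> frac_closed R ->
  ((forall a : A, sqfree_in R a -> sqfree a) <-> sqf_closed R).
Proof.
move=> hU [h1 hsub hmul] hsu _.
have hS : forall b, ~ unit_in R b -> b \isn't a GRing.unit.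
  by move=> b H; apply/negP => /hsu.
have hST : forall b : A, ~ unit_in predT b -> b \isn't a GRing.unit.
  by move=> b H; apply/negP => /unit_inT.
split.
  move=> Hi x y sy aR a0.
  have x0 : x != 0 by apply: contraNneq a0 => ->; rewrite expr0n mul0r.
  have [n fa] := @fl_ex _ hU _ a0.
  have [x' [y' [x'R y'R aE sy']]] := @sqf_ex _ hU R hmul h1 hS n _ a0 fa aR.
  have [m fx] := @fl_ex _ hU _ x0.
  have [u uU xE] := @uniq_dec _ hU m x x' y y' x0 fx aE sy (Hi _ sy').
  have [uR [u' [u'R uu']]] := (hsu u).1 uU.
  have x'0 : x' != 0 by apply: contraNneq x0 => e; rewrite xE e mulr0.
  split; first by rewrite xE; apply hmul.
  have E : u ^+ 2 * y = y'.
    apply: (mulfI (expf_neq0 2 x'0)).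
    by rewrite -aE xE exprMn mulrA [x' ^+ 2 * _]mulrC.
  have -> : y = u' ^+ 2 * y'.
    by rewrite -E mulrA -exprMn [u' * u]mulrC uu' expr1n mul1r.
  by rewrite expr2; apply hmul => //; apply hmul.
move=> Hii a [aR nsq].
have a0 : a != 0.
  have R0 : 0 \in R by rewrite -(subrr 1); apply hsub.
  apply/negP => /eqP a0; apply: nsq; exists 0, 0; split => //.
  - by rewrite a0 mulr0.
  - by move=> [_ [b' [_ e]]]; move: e; rewrite mul0r => /eqP; rewrite eq_sym oner_eq0.
have [n fa] := @fl_ex _ hU _ a0.
have hmT : forall x y : A, x \in predT -> y \in predT -> x * y \in predT by [].
have [x [y [_ _ aE sy]]] := @sqf_ex _ hU predT hmT erefl hST n a a0 fa erefl.
have aR' : x ^+ 2 * y \in R by rewrite -aE.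
have a0' : x ^+ 2 * y != 0 by rewrite -aE.
have [xR yR] := Hii x y sy aR' a0'.
have xU : x \is a GRing.unit.
  apply/hsu; apply: NNPP => H; apply: nsq; exists x, y; split => //.
split => //; move=> [b [c [_ _ E ub]]].
apply: ub; apply/unit_inT.
apply: (@sqfree_nsq _ y b (x^-1 ^+ 2 * c) sy).
by rewrite mulrCA -E aE mulrA -exprMn mulVr // expr1n mul1r.
Qed.
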